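(* Let $z^0\in X$, $\gamma\in(0,2)$, $\delta\in[0,1/2)$, and let $\{\sigma_k\},\{\eta_k\}$ be nonnegative with $\sum_k\eta_k<\infty$, $\inf_k\sigma_k>0$; let $z^{k+1}$ be an output of IGPPAstep$(z^k,\sigma_k,\eta_k,\delta,\gamma,M)$ for all $k\ge0$. Assume $T$ satisfies the bounded metric subregularity condition, let $\bar z^0$ be a point of $\Omega$ nearest to $z^0$ in $\|\cdot\|_M$, let $r\ge\|\bar z^0\|+\frac{1}{\lambda_{\min}(M)}(\operatorname{dist}_M(z^0,\Omega)+\gamma\sum_k\eta_k)$ and $\kappa_r>0$ with $\operatorname{dist}(z,\Omega)\le\kappa_r\operatorname{dist}(0,T(z))$ for $\|z\|\le r$. Let $\alpha>0$ be such that $\rho:=\frac{1}{1-\delta}\Big(\sqrt{1-\frac{\min\{\gamma,2\gamma-\gamma^2\}\alpha^2}{\alpha^2+1}}+\delta\big(\frac{\min\{\gamma,1\}}{\sqrt{\alpha^2+1}}+1\big)\Big)<1.$ If $\sigma_k\ge\kappa_r\alpha$ for all $k\ge0$, then $\operatorname{dist}_M(z^k,\Omega)\le\rho^k\operatorname{dist}_M(z^0,\Omega)$ for all $k\ge0$.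
   Context: $X$ is a finite-dimensional real Hilbert space; $T:X\rightrightarrows X$ is maximal monotone with $\Omega:=T^{-1}(0)\neq\emptyset$. $M$ is self-adjoint positive definite with $\lambda_{\max}(M)=1$; $\|z\|_M=\sqrt{\langle z,Mz\rangle}$, $\operatorname{dist}_M(z,D)=\min_{d\in D}\|d-z\|_M$, $\operatorname{dist}=\operatorname{dist}_I$. $\mathcal{J}_{\sigma M^{-1}T}:=(I+\sigma M^{-1}T)^{-1}$. $z^+$ is an output of IGPPAstep$(z,\sigma,\eta,\delta,\gamma,M)$ if $z^+=\gamma w+(1-\gamma)z$ for some $w$ with $\|w-\mathcal{J}_{\sigma M^{-1}T}(z)\|_M\le\min\{\eta,\delta\|w-z\|_M\}$. Bounded metric subregularity: for every $r>0$ there is $\kappa_r>0$ with $\operatorname{dist}(z,\Omega)\le\kappa_r\operatorname{dist}(0,T(z))$ for all $\|z\|\le r$. *)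

(* Defs.v *)
(* R : realType, X = 'cV[R]_n with the standard inner product. *)
From HB Require Import structures.
From mathcomp Require Import all_boot all_order all_algebra.
From mathcomp Require Import all_classical all_reals.
From mathcomp Require Import topology normedtype sequences.

Set Implicit Arguments.
Unset Strict Implicit.
Unset Printing Implicit Defensive.

Import Order.TTheory GRing.Theory Num.Theory numFieldNormedType.Exports.
Local Open Scope ring_scope.
Local Open Scope classical_set_scope.

Section Defs.
Variables (R : realType) (n : nat).
Local Notation vec := 'cV[R]_n.

Definition inner (x y : vec) : R := (x^T *m y) 0 0.

Definition enorm (z : vec) : R := Num.sqrt (inner z z).

Definition normM (M : 'M[R]_n) (z : vec) : R := Num.sqrt (inner z (M *m z)).

(* dist_M(z, D) = min_{d in D} ||d - z||_M (the minimum exists for the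
   closed nonempty sets used here, so it equals the infimum) *)
Definition distM (M : 'M[R]_n) (z : vec) (D : set vec) : R :=
  inf [set normM M (d - z) | d in D].

Definition dist (z : vec) (D : set vec) : R :=
  inf [set enorm (d - z) | d in D].

(* set-valued operators T : X ⇉ X, given by their graph: T x u <-> u ∈ T(x) *)
Definition monotone_op (T : vec -> vec -> Prop) : Prop :=
  forall x y u v, T x u -> T y v -> 0 <= inner (x - y) (u - v).

Definition maximal_monotone (T : vec -> vec -> Prop) : Prop :=
  monotone_op T /\
  forall S : vec -> vec -> Prop, monotone_op S ->
    (forall x u, T x u -> S x u) -> forall x u, S x u -> T x u.

Definition zeros (T : vec -> vec -> Prop) : set vec := [set z | T z 0].

Definition self_adjoint (M : 'M[R]_n) : Prop := M^T = M.

Definition pos_def (M : 'M[R]_n) : Prop :=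
  forall x : vec, x != 0 -> 0 < inner x (M *m x).

Definition is_lambda_min (M : 'M[R]_n) (l : R) : Prop :=
  eigenvalue M l /\ forall a, eigenvalue M a -> l <= a.
Definition is_lambda_max (M : 'M[R]_n) (l : R) : Prop :=
  eigenvalue M l /\ forall a, eigenvalue M a -> a <= l.

(* p = J_{sigma M^{-1} T}(z) = (I + sigma M^{-1} T)^{-1}(z), i.e.
   z ∈ p + sigma M^{-1} T(p).  (Single-valued and everywhere defined
   for maximal monotone T, sigma > 0, M positive definite.) *)
Definition resolvent_pt (T : vec -> vec -> Prop) (M : 'M[R]_n) (sigma : R)
    (z p : vec) : Prop :=
  exists u, T p u /\ z = p + sigma *: (invmx M *m u).

Definition IGPPAstep_out (T : vec -> vec -> Prop) (z : vec) (sigma eta delta gamma : R)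
    (M : 'M[R]_n) (zplus : vec) : Prop :=
  exists w p, resolvent_pt T M sigma z p /\
    normM M (w - p) <= Num.min eta (delta * normM M (w - z)) /\
    zplus = gamma *: w + (1 - gamma) *: z.

(* dist(z, Omega) <= kappa * dist(0, T z) for all ||z|| <= r;
   written out: dist(0,T z) = inf_{u ∈ T z} ||u|| (= +oo if T z = ∅) *)
Definition subregular_on (T : vec -> vec -> Prop) (r kappa : R) : Prop :=
  forall z, enorm z <= r -> forall u, T z u -> dist z (zeros T) <= kappa * enorm u.

Definition bounded_metric_subregular (T : vec -> vec -> Prop) : Prop :=
  forall r, 0 < r -> exists kappa, 0 < kappa /\ subregular_on T r kappa.

End Defs.

Definition rate {R : realType} (gamma delta alpha : R) : R :=
  (1 / (1 - delta)) *
  (Num.sqrt (1 - (Num.min gamma (2 * gamma - gamma ^+ 2)) * alpha ^+ 2 / (alpha ^+ 2 + 1))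
   + delta * (Num.min gamma 1 / Num.sqrt (alpha ^+ 2 + 1) + 1)).

(* Main.v *)
Require Import Defs.
From HB Require Import structures.
From mathcomp Require Import all_boot all_order all_algebra.
From mathcomp Require Import all_classical all_reals.
From mathcomp Require Import topology normedtype sequences.
From mathcomp Require Import spectral sesquilinear.
From mathcomp.real_closed Require Import complex.
From mathcomp Require Import ring lra.
Set Implicit Arguments.
Unset Strict Implicit.
Unset Printing Implicit Defensive.
Import Order.TTheory GRing.Theory Num.Theory numFieldNormedType.Exports.
Local Open Scope ring_scope.
Local Open Scope classical_set_scope.
Local Open Scope sesquilinear_scope.

Section Inner.
Variables (R : realType) (n : nat).
Local Notation vec := 'cV[R]_n.

Lemma innerE (x y : vec) : inner x y = \sum_i x i 0 * y i 0.
Proof. by rewrite /inner mxE; apply: eq_bigr => i _; rewrite mxE. Qed.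

Lemma innerC (x y : vec) : inner x y = inner y x.
Proof. by rewrite !innerE; apply: eq_bigr => i _; rewrite mulrC. Qed.

Lemma innerDl (x y z : vec) : inner (x + y) z = inner x z + inner y z.
Proof. by rewrite /inner linearD mulmxDl mxE. Qed.

Lemma innerZl a (x z : vec) : inner (a *: x) z = a * inner x z.
Proof. by rewrite /inner linearZ -scalemxAl mxE. Qed.

Lemma innerNl (x z : vec) : inner (- x) z = - inner x z.
Proof. by rewrite -scaleN1r innerZl mulN1r. Qed.

Lemma innerBl (x y z : vec) : inner (x - y) z = inner x z - inner y z.
Proof. by rewrite innerDl innerNl. Qed.

Lemma innerDr (x y z : vec) : inner z (x + y) = inner z x + inner z y.
Proof. by rewrite innerC innerDl !(innerC z). Qed.

Lemma innerZr a (x z : vec) : inner z (a *: x) = a * inner z x.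
Proof. by rewrite innerC innerZl innerC. Qed.

Lemma innerNr (x z : vec) : inner z (- x) = - inner z x.
Proof. by rewrite innerC innerNl innerC. Qed.

Lemma innerBr (x y z : vec) : inner z (x - y) = inner z x - inner z y.
Proof. by rewrite innerDr innerNr. Qed.

Lemma inner0l (z : vec) : inner 0 z = 0.
Proof. by rewrite -(scale0r 0) innerZl mul0r. Qed.

Lemma inner_ge0 (x : vec) : 0 <= inner x x.
Proof. by rewrite innerE; apply: sumr_ge0 => i _; rewrite -expr2 sqr_ge0. Qed.

Lemma inner_gt0 (x : vec) : x != 0 -> 0 < inner x x.
Proof.
move=> x0; rewrite lt_def inner_ge0 andbT; apply: contra x0 => /eqP.
rewrite innerE => /eqP; rewrite psumr_eq0 => [/allP H|i _]; last by rewrite -expr2 sqr_ge0.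
apply/eqP/matrixP => i j; rewrite (ord1 j) mxE.
by have /(_ (mem_index_enum i)) := H i; rewrite implyTb -expr2 sqrf_eq0 => /eqP.
Qed.

Lemma inner_trmx (A : 'M[R]_n) (x y : vec) : inner x (A *m y) = inner (A^T *m x) y.
Proof.
by rewrite /inner trmx_mul trmxK mulmxA.
Qed.

End Inner.

Section Form.
Variables (R : realType) (n : nat) (M : 'M[R]_n).
Hypotheses (Msym : M^T = M) (Mpd : pos_def M).
Local Notation vec := 'cV[R]_n.
Definition ip (x y : vec) := inner x (M *m y).

Lemma ipC x y : ip x y = ip y x.
Proof. by rewrite /ip inner_trmx Msym innerC. Qed.
Lemma ipDr x y z : ip z (x + y) = ip z x + ip z y.
Proof. by rewrite /ip mulmxDr innerDr. Qed.
Lemma ipZr a x z : ip z (a *: x) = a * ip z x.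
Proof. by rewrite /ip -scalemxAr innerZr. Qed.
Lemma ipNr x z : ip z (- x) = - ip z x.
Proof. by rewrite -scaleN1r ipZr mulN1r. Qed.
Lemma ipBr x y z : ip z (x - y) = ip z x - ip z y.
Proof. by rewrite ipDr ipNr. Qed.
Lemma ipDl x y z : ip (x + y) z = ip x z + ip y z.
Proof. by rewrite ipC ipDr !(ipC z). Qed.
Lemma ipZl a x z : ip (a *: x) z = a * ip x z.
Proof. by rewrite ipC ipZr ipC. Qed.
Lemma ipNl x z : ip (- x) z = - ip x z.
Proof. by rewrite ipC ipNr ipC. Qed.
Lemma ipBl x y z : ip (x - y) z = ip x z - ip y z.
Proof. by rewrite ipDl ipNl. Qed.
Lemma ip0r x : ip x 0 = 0.
Proof. by rewrite -(scale0r 0) ipZr mul0r. Qed.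

Lemma ip_ge0 x : 0 <= ip x x.
Proof.
have [->|x0] := eqVneq x 0; first by rewrite ip0r.
exact/ltW/Mpd.
Qed.

Lemma normM_sq x : normM M x ^+ 2 = ip x x.
Proof. by rewrite /normM sqr_sqrtr // ip_ge0. Qed.

Lemma normM_ge0 x : 0 <= normM M x.
Proof. exact: sqrtr_ge0. Qed.

Lemma normM_le x a : 0 <= a -> ip x x <= a ^+ 2 -> normM M x <= a.
Proof.
move=> a0 h; rewrite -(ler_pXn2r (_ : 0 < 2)%N) ?nnegrE ?normM_ge0 //.
by rewrite normM_sq.
Qed.

Lemma normM_sq_le x a : normM M x <= a -> ip x x <= a ^+ 2.
Proof.
move=> h; have a0 : 0 <= a by exact: le_trans (normM_ge0 x) h.
by rewrite -normM_sq ler_pXn2r ?nnegrE ?normM_ge0.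
Qed.

Lemma ipCS x y : ip x y ^+ 2 <= ip x x * ip y y.
Proof.
have [->|y0] := eqVneq y 0; first by rewrite ip0r !ip0r expr0n mulr0.
have Yp : 0 < ip y y by apply: Mpd.
have := ip_ge0 (ip y y *: x - ip x y *: y).
rewrite !(ipBl, ipBr, ipZl, ipZr) (ipC y x) => h.
have : 0 <= ip y y * (ip x x * ip y y - ip x y ^+ 2) by nra.
by rewrite pmulr_rge0 // subr_ge0.
Qed.

Lemma ip_le x y : ip x y <= normM M x * normM M y.
Proof.
have [h|h] := lerP (ip x y) 0.
  by apply: le_trans h _; rewrite mulr_ge0 ?normM_ge0.
have H : ip x y ^+ 2 <= (normM M x * normM M y) ^+ 2.
  by rewrite exprMn !normM_sq; apply: ipCS.
move: H; rewrite ler_pXn2r // nnegrE ?mulr_ge0 ?normM_ge0 //; exact: ltW.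
Qed.

Lemma normM_triangle x y : normM M (x + y) <= normM M x + normM M y.
Proof.
apply: normM_le; first by rewrite addr_ge0 ?normM_ge0.
rewrite !(ipDl, ipDr) (ipC y x) sqrrD !normM_sq.
have := ip_le x y; lra.
Qed.

Lemma normMN x : normM M (- x) = normM M x.
Proof. by rewrite /normM -/(ip _ _) -/(ip x x) ipNl ipNr opprK. Qed.

Lemma normMB x y : normM M (x - y) = normM M (y - x).
Proof. by rewrite -normMN opprB. Qed.

Lemma normMZ a x : normM M (a *: x) = `|a| * normM M x.
Proof.
by rewrite /normM -/(ip _ _) -/(ip x x) ipZl ipZr mulrA -expr2 sqrtrM ?sqr_ge0 // sqrtr_sqr.
Qed.

End Form.
Lemma psd_of_eig (R : realType) n (A : 'M[R]_n) : A^T = A ->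
  (forall a, eigenvalue A a -> 0 <= a) ->
  forall x : 'cV[R]_n, 0 <= (x^T *m A *m x) 0 0.
Proof.
move=> Asym Aeig x.
pose f := real_complex R.
pose AC := map_mx f A.
have ACreal : AC \is a realmx.
  apply/mxOverP => i j; rewrite mxE; apply/complex_realP; by eexists.
have ACsym : AC \is symmetricmx.
  apply/is_hermitianmxP; rewrite expr0 scale1r map_mx_id // /AC map_trmx Asym //.
have ACh : AC \is hermsymmx by apply: realsym_hermsym.
have ACn : AC \is normalmx by apply: hermitian_normalmx.
have := orthomx_spectralP ACn.
set P := spectralmx AC; set d := spectral_diag AC => ACE.
have Pu : P \is unitarymx := spectral_unitarymx AC.
have dreal := hermitian_spectral_diag_real ACh.
have dge0 : forall j, 0 <= d 0 j.
  move=> j.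
  have dj : d 0 j \is Num.real by apply: (mxOverP dreal).
  have [c cE] := complex_realP _ dj.
  rewrite cE ler0c; apply: Aeig.
  rewrite eigenvalue_root_char -(fmorph_root f) map_char_poly /f.
  suff H : root (char_poly AC) (d 0 j) by move: H; rewrite cE.
  rewrite -eigenvalue_root_char; apply/eigenvalueP.
  exists (row j P).
    have -> : AC = P^t* *m diag_mx d *m P by rewrite {1}ACE invmx_unitary.
    rewrite -row_mul !mulmxA (unitarymxP Pu) mul1mx.
    by rewrite row_mul row_diag_mx -scalemxAl -rowE.
  apply/eqP => rj0.
  have /row_unitarymxP/(_ j j) := Pu; rewrite rj0 eqxx linear0l => /eqP.
  by rewrite eq_sym oner_eq0.
rewrite -ler0c.
suff H : 0 <= (map_mx f (x^T *m A *m x)) 0 0 by move: H; rewrite mxE; apply.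
rewrite !map_mxM -map_trmx -/AC.
set v := (map_mx f x)^T.
have -> : map_mx f x = v^t*.
  apply/matrixP => i j; rewrite !mxE /=; apply/esym/CrealP/complex_realP; by eexists.
have -> : AC = P^t* *m diag_mx d *m P by rewrite {1}ACE invmx_unitary.
set y := v *m P^t*.
have -> : v *m (P^t* *m diag_mx d *m P) *m v^t* = y *m diag_mx d *m y^t*.
  rewrite /y -!mulmxA; congr (_ *m (_ *m (_ *m _))).
  by rewrite trmx_mul map_mxM trmxCK.
rewrite mxE; apply: sumr_ge0 => k _.
rewrite mul_mx_diag !mxE mulrAC; apply: mulr_ge0 => //.
exact: mul_conjC_ge0.
Qed.

Lemma enormE (R : realType) n (x : 'cV[R]_n) : enorm x = normM 1%:M x.
Proof. by rewrite /enorm /normM mul1mx. Qed.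

Lemma pos_def1 (R : realType) n : pos_def (1%:M : 'M[R]_n).
Proof. by move=> x x0; rewrite mul1mx inner_gt0. Qed.

Lemma enorm_triangle (R : realType) n (x y : 'cV[R]_n) : enorm (x + y) <= enorm x + enorm y.
Proof. rewrite !enormE; apply: normM_triangle; [exact: trmx1 | exact: pos_def1]. Qed.

Lemma enorm_ge0 (R : realType) n (x : 'cV[R]_n) : 0 <= enorm x.
Proof. exact: sqrtr_ge0. Qed.

Section Spec.
Variables (R : realType) (n : nat) (M : 'M[R]_n) (lmin : R).
Hypotheses (Msym : M^T = M) (Mpd : pos_def M) (Hmax : is_lambda_max M 1)
  (Hmin : is_lambda_min M lmin).
Local Notation vec := 'cV[R]_n.

Lemma ip_le_inner (x : vec) : ip M x x <= inner x x.
Proof.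
have A1 : (1%:M - M)^T = 1%:M - M by rewrite linearB /= trmx1 Msym.
have := psd_of_eig A1 _ x.
rewrite -mulmxA -/(inner x _) mulmxBl mul1mx innerBr subr_ge0; apply.
move=> b /eigenvalueP [v vE v0].
have : eigenvalue M (1 - b).
  apply/eigenvalueP; exists v => //.
  by rewrite scalerBl scale1r -vE mulmxBr mulmx1 opprB addrC subrK.
by move/(proj2 Hmax); rewrite gerBl.
Qed.

Lemma lmin_le_ip (x : vec) : lmin * inner x x <= ip M x x.
Proof.
have A1 : (M - lmin%:M)^T = M - lmin%:M by rewrite linearB /= tr_scalar_mx Msym.
have := psd_of_eig A1 _ x.
rewrite -mulmxA -/(inner x _) mulmxBl mul_scalar_mx innerBr innerZr subr_ge0; apply.
move=> b /eigenvalueP [v vE v0].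
have : eigenvalue M (b + lmin).
  apply/eigenvalueP; exists v => //.
  by rewrite scalerDl -vE mulmxBr mul_mx_scalar subrK.
by move/(proj2 Hmin); rewrite lerDr.
Qed.

Lemma lmin_gt0 : 0 < lmin.
Proof.
have /eigenvalueP [v vE v0] := proj1 Hmin.
have x0 : v^T != 0 by rewrite trmx_eq0.
have := Mpd x0; rewrite -{1}Msym -trmx_mul vE linearZ /= innerZr.
by rewrite pmulr_lgt0 // inner_gt0.
Qed.

Lemma lmin_le1 : lmin <= 1.
Proof. exact: (proj2 Hmax) (proj1 Hmin). Qed.

Lemma normM_le_enorm (x : vec) : normM M x <= enorm x.
Proof. exact/ler_wsqrtr/ip_le_inner. Qed.

Lemma enorm_M (x : vec) : enorm (M *m x) <= normM M x.
Proof.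
have h : enorm (M *m x) ^+ 2 <= normM M x * enorm (M *m x).
  rewrite /enorm sqr_sqrtr ?inner_ge0 //.
  have e : inner (M *m x) (M *m x) = ip M x (M *m x) by rewrite /ip [RHS]inner_trmx Msym.
  rewrite {1}e.
  apply: le_trans (ip_le Msym Mpd _ _) _.
  by rewrite ler_wpM2l ?normM_ge0 // normM_le_enorm.
have [e0|epos] := eqVneq (enorm (M *m x)) 0; first by rewrite e0 normM_ge0.
have ep : 0 < enorm (M *m x) by rewrite lt_def epos enorm_ge0.
by move: h; rewrite expr2 ler_pM2r.
Qed.

Lemma enorm_le_normM (x : vec) : enorm x <= normM M x / lmin.
Proof.
have l0 := lmin_gt0; have l1 := lmin_le1.
have e : lmin = Num.sqrt (lmin ^+ 2) by rewrite sqrtr_sqr ger0_norm // ltW.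
rewrite ler_pdivlMr // [X in _ * X]e /enorm /normM.
rewrite -sqrtrM ?inner_ge0 //; apply: ler_wsqrtr.
have h1 := lmin_le_ip x; rewrite /ip in h1.
have h2 : 0 <= (inner x x * lmin) * (1 - lmin) by apply: mulr_ge0; [apply: mulr_ge0; [exact: inner_ge0 | exact: ltW] | rewrite subr_ge0].
nra.
Qed.

End Spec.

Section Img.
Variables (R : realType) (T : Type) (D : set T) (f : T -> R).
Hypothesis f0 : forall x, 0 <= f x.

Lemma img_hlb : has_lbound [set f x | x in D].
Proof. by exists 0 => _ [x _ <-]. Qed.

Lemma inf_img_le d : D d -> inf [set f x | x in D] <= f d.
Proof. by move=> Dd; apply: (ge_inf img_hlb); exists d. Qed.

Lemma inf_img_ge0 : D !=set0 -> 0 <= inf [set f x | x in D].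
Proof.
move=> [d Dd]; apply: lb_le_inf; first by exists (f d), d.
by move=> _ [x _ <-].
Qed.

Lemma inf_img_adh e : D !=set0 -> 0 < e ->
  exists2 d, D d & f d < inf [set f x | x in D] + e.
Proof.
move=> [d Dd] e0.
have hi : has_inf [set f x | x in D] by split; [exists (f d), d | exact: img_hlb].
by have [_ [x Dx <-] h] := inf_adherent e0 hi; exists x.
Qed.

End Img.

Lemma M_unit (R : realType) n (M : 'M[R]_n) : M^T = M -> pos_def M -> M \in unitmx.
Proof.
move=> Msym Mpd; rewrite -row_free_unit -kermx_eq0; apply/eqP/row_matrixP => i.
rewrite row0; set v := row i (kermx M).
have h : v *m M = 0 by apply/sub_kermxP; rewrite row_sub.
apply/eqP; apply: contraT => v0.
have vT0 : v^T != 0 by rewrite trmx_eq0.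
have := Mpd _ vT0.
by rewrite -{1}Msym -trmx_mul h trmx0 /inner mulmx0 mxE ltxx.
Qed.

Lemma zeros_convex (R : realType) n (T : 'cV[R]_n -> 'cV[R]_n -> Prop) y1 y2 th :
  maximal_monotone T -> 0 <= th -> th <= 1 -> zeros T y1 -> zeros T y2 ->
  zeros T ((1 - th) *: y1 + th *: y2).
Proof.
move=> [mon mx] th0 th1 Z1 Z2; set y := _ + _.
have key : forall x u, T x u -> 0 <= inner (x - y) u.
  move=> x u Txu.
  have m1 := mon _ _ _ _ Txu Z1; have m2 := mon _ _ _ _ Txu Z2.
  rewrite subr0 !innerBl in m1 m2.
  rewrite innerBl /y innerDl !innerZl.
  nra.
apply: (mx (fun x u => T x u \/ (x = y /\ u = 0))); last by right.
- move=> x1 x2 u1 u2 [h1|[-> ->]] [h2|[-> ->]].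
  + exact: mon.
  + by rewrite subr0; apply: key.
  + by rewrite sub0r -opprB innerNl innerNr opprK; apply: key.
  + by rewrite subrr inner0l.
- by move=> x u h; left.
Qed.

Lemma vec_eq (R : realType) n (x y : 'cV[R]_n) : (forall i, x i 0 = y i 0) -> x = y.
Proof. by move=> h; apply/matrixP => i j; rewrite (ord1 j). Qed.
Lemma scalar_core (R : realFieldType) (g al t C D tau s K na nb E X : R) :
  0 < g -> g < 2 -> 0 < al -> 0 <= t -> t <= 1 -> t * (al ^+ 2 + 1) = al ^+ 2 ->
  (C = g \/ C = 2 * g - g ^+ 2) -> 0 <= C -> C <= 1 ->
  (g <= 1 -> C = g) -> (1 < g -> C = 2 * g - g ^+ 2) ->
  0 <= D -> 0 < tau -> tau <= 1 -> 0 <= s ->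
  al * K = 2 * (D + 1) + al -> K * tau <= s ^+ 2 ->
  0 <= na -> 0 <= nb -> na <= D + tau -> al * nb <= na + al * tau ->
  na ^+ 2 + nb ^+ 2 <= E -> E <= (D + tau) ^+ 2 ->
  (1 < g -> X <= (1 - g) ^+ 2 * na ^+ 2 + nb ^+ 2) ->
  (g <= 1 -> X <= (1 - g) * E + g * nb ^+ 2) ->
  X <= (1 - C * t) * E + K * tau.
Proof.
move=> g0 g2 a0 t0 t1 ht _ C0 C1 Cl Cg D0 ta0 ta1 s0 hK hKs na0 nb0 naD hnb hE hE2 X1 X2.
have K0 : 0 <= K.
  have : 0 <= al * K by rewrite hK; lra.
  by rewrite pmulr_rge0.
have i1 : al ^+ 2 * nb ^+ 2 <= na ^+ 2 + al ^+ 2 * K * tau.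
  have h1 : (al * nb) ^+ 2 <= (na + al * tau) ^+ 2.
    have : 0 <= al * nb by rewrite mulr_ge0 // ltW.
    nra.
  have h2 : al * na * tau <= al * (D + 1) * tau.
    by rewrite ler_pM2r // ler_pM2l //; lra.
  have h3 : al ^+ 2 * tau ^+ 2 <= al ^+ 2 * tau.
    rewrite ler_pM2l ?exprn_gt0 //; nra.
  have h4 : al ^+ 2 * K = al * (al * K) by rewrite expr2 mulrA.
  rewrite h4 hK; move: h1; rewrite exprMn sqrrD exprMn; nra.
have i2 : nb ^+ 2 <= (1 - t) * (na ^+ 2 + nb ^+ 2) + t * K * tau.
  have e1 : (al ^+ 2 + 1) * nb ^+ 2 <= na ^+ 2 + nb ^+ 2 + al ^+ 2 * K * tau by lra.
  have ht1 : (1 - t) * (al ^+ 2 + 1) = 1 by lra.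
  have ht2 : (1 - t) * al ^+ 2 = t by lra.
  have e1' := ler_wpM2l (_ : 0 <= 1 - t) e1.
  have e3 : (1 - t) * (al ^+ 2 * K * tau) = t * K * tau.
  by rewrite mulrA (mulrA (1 - t) (al ^+ 2)) ht2.
  move: e1'; rewrite mulrA ht1 mul1r mulrDr e3 => e1'.
  apply: e1'; lra.
have AB0 : 0 <= na ^+ 2 + nb ^+ 2 by rewrite addr_ge0 ?sqr_ge0.
have q20 : 0 <= 1 - C * t.
  have : 0 <= (1 - C) * t by apply: mulr_ge0 => //; lra.
  nra.
have CtK : C * t * K * tau <= K * tau.
  have : 0 <= (1 - C * t) * (K * tau).
    by apply: mulr_ge0 => //; apply: mulr_ge0 => //; exact: ltW.
  nra.
have [gl|gg] := lerP g 1.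
  have CE := Cl gl; have hX := X2 gl.
  have s1 := ler_wpM2l (ltW g0) i2.
  have s2 : g * (1 - t) * (na ^+ 2 + nb ^+ 2) <= g * (1 - t) * E.
    by apply: ler_wpM2l => //; apply: mulr_ge0; lra.
  rewrite CE in CtK *; lra.
have CE := Cg gg; have hX := X1 gg.
have s1 := ler_wpM2l C0 i2.
have s2 := ler_wpM2l q20 hE.
rewrite CE in CtK s1 s2 *; lra.
Qed.

Section Step.
Variables (R : realType) (n : nat) (T : 'cV[R]_n -> 'cV[R]_n -> Prop) (M : 'M[R]_n)
  (lmin gamma delta r kappa alpha : R).
Hypotheses (mm : maximal_monotone T) (Om0 : zeros T !=set0) (Msym : M^T = M)
  (Mpd : pos_def M) (Hmax : is_lambda_max M 1) (Hmin : is_lambda_min M lmin)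
  (g0 : 0 < gamma) (g2 : gamma < 2) (d0 : 0 <= delta) (d1 : delta < 1 / 2)
  (k0 : 0 < kappa) (sr : subregular_on T r kappa) (a0 : 0 < alpha).
Local Notation Om := (zeros T).
Local Notation vec := 'cV[R]_n.

Lemma Mres (z p u : vec) s : 0 < s -> z = p + s *: (invmx M *m u) -> M *m (z - p) = s *: u.
Proof.
move=> s0 ->; rewrite addrC addKr -scalemxAr mulKVmx //; exact: M_unit.
Qed.

Lemma mono_res (y : vec) s (z p u : vec) : 0 < s -> T p u -> z = p + s *: (invmx M *m u) -> Om y ->
  0 <= ip M (z - p) (p - y).
Proof.
move=> s0 Tpu zE Oy; have Mu := Mres s0 zE.
have := (proj1 mm) _ _ _ _ Tpu Oy; rewrite subr0 => h.
rewrite (ipC Msym) /ip Mu innerZr; exact: mulr_ge0 (ltW s0) h.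
Qed.

Lemma ip_split (x y : vec) : ip M (x + y) (x + y) = ip M x x + 2 * ip M x y + ip M y y.
Proof. have e := ipC Msym y x. rewrite !(ipDl, ipDr) //. lra. Qed.

Lemma fejer_p (y : vec) s (z p u : vec) : 0 < s -> T p u -> z = p + s *: (invmx M *m u) -> Om y ->
  normM M (p - y) <= normM M (z - y).
Proof.
move=> s0 Tpu zE Oy; have c := mono_res s0 Tpu zE Oy.
apply: normM_le => //; first exact: normM_ge0.
have -> : z - y = (z - p) + (p - y) by rewrite addrA subrK.
rewrite normM_sq // [X in _ <= X]ip_split; have := ip_ge0 Mpd (z - p); lra.
Qed.

Lemma fejer_e (y : vec) s (z p u : vec) : 0 < s -> T p u -> z = p + s *: (invmx M *m u) -> Om y ->
  normM M (gamma *: p + (1 - gamma) *: z - y) <= normM M (z - y).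
Proof.
move=> s0 Tpu zE Oy; have c := mono_res s0 Tpu zE Oy.
apply: normM_le => //; first exact: normM_ge0.
have -> : gamma *: p + (1 - gamma) *: z - y = (1 - gamma) *: (z - p) + (p - y).
  by apply/matrixP => i j; rewrite !mxE; ring.
have -> : z - y = (z - p) + (p - y) by rewrite addrA subrK.
rewrite normM_sq // [X in X <= _]ip_split [X in _ <= X]ip_split !(ipZl, ipZr) //.
have := ip_ge0 Mpd (z - p).
have : 0 <= gamma * (2 - gamma) by apply: mulr_ge0; [exact: ltW | rewrite subr_ge0; exact: ltW].
nra.
Qed.

End Step.

Definition qq (R : realType) (gamma alpha : R) :=
  Num.sqrt (1 - Num.min gamma (2 * gamma - gamma ^+ 2) * alpha ^+ 2 / (alpha ^+ 2 + 1)).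
Definition cc (R : realType) (gamma delta : R) := gamma * delta / (1 - delta).

Lemma one_step (R : realType) (n : nat) (T : 'cV[R]_n -> 'cV[R]_n -> Prop) (M : 'M[R]_n)
  (gamma delta r kappa alpha : R)
  (mm : maximal_monotone T) (Om0 : zeros T !=set0) (Msym : M^T = M)
  (Mpd : pos_def M) (Hmax : is_lambda_max M 1)
  (g0 : 0 < gamma) (g2 : gamma < 2) (d0 : 0 <= delta) (d1 : delta < 1 / 2)
  (k0 : 0 < kappa) (sr : subregular_on T r kappa) (a0 : 0 < alpha)
  (z p u w zp : 'cV[R]_n) s et :
  T p u -> z = p + s *: (invmx M *m u) ->
  normM M (w - p) <= Num.min et (delta * normM M (w - z)) ->
  zp = gamma *: w + (1 - gamma) *: z -> kappa * alpha <= s -> enorm p <= r ->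
  distM M zp (zeros T) <= (qq gamma alpha + cc gamma delta) * distM M z (zeros T).
Proof.
set QQ := qq gamma alpha; set CC := cc gamma delta.
have G0 := g0; have G2 := g2; have D0' := d0; have D1 := d1; have K0 := k0; have A0 := a0.
move=> Tpu zE hw zpE ks pr.
have s0 : 0 < s by apply: lt_le_trans ks; rewrite mulr_gt0.
have nge0 := normM_ge0 M.
set D := distM M z (zeros T).
have D0 : 0 <= D by apply: inf_img_ge0 => //; exact: normM_ge0.
set a := z - p; set na := normM M a.
have na0 : 0 <= na by apply: normM_ge0.
have Ma : M *m a = s *: u := Mres Msym Mpd s0 zE.
have hu : enorm u <= na / s.
  have -> : u = s^-1 *: (M *m a) by rewrite Ma scalerA mulVf ?scale1r // gt_eqF.
  rewrite enormE normMZ ?trmx1 // -enormE gtr0_norm ?invr_gt0 // mulrC.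
  by rewrite ler_pM2r ?invr_gt0 // enorm_M.
have hdist : dist p (zeros T) <= na / alpha.
  apply: le_trans (sr p pr u Tpu) _.
  have hk : kappa / s <= alpha^-1.
    rewrite ler_pdivrMr // -(@ler_pM2l _ alpha) // mulrA mulfV ?gt_eqF // mul1r.
    by rewrite mulrC.
  apply: le_trans (ler_wpM2l (ltW k0) hu) _.
  rewrite mulrA (mulrC kappa) -mulrA [X in _ <= X]mulrC.
  by rewrite [X in X <= _]mulrC ler_wpM2r.
move: hw; rewrite le_min => /andP [_ hw].
have hwz : (1 - delta) * normM M (w - z) <= na.
  have : normM M (w - z) <= normM M (w - p) + na.
    have -> : w - z = (w - p) + (p - z) by rewrite addrA subrK.
    by apply: le_trans (normM_triangle Msym Mpd _ _) _; rewrite (normMB Msym p z).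
  clear -hw; lra.
set ze := gamma *: p + (1 - gamma) *: z.
have hzp : normM M (ze - zp) <= CC * na.
  have -> : ze - zp = gamma *: (p - w).
    by rewrite zpE /ze; apply/matrixP => i j; rewrite !mxE; ring.
  rewrite normMZ // gtr0_norm // (normMB Msym) /CC /cc.
  have dl : 0 < 1 - delta by clear -D1; lra.
  have hid : (1 - delta) * (1 - delta)^-1 = 1 by rewrite mulfV // gt_eqF.
  have id0 : 0 < (1 - delta)^-1 by rewrite invr_gt0.
  have h1 : delta * normM M (w - z) <= delta * (1 - delta)^-1 * na.
    have := ler_wpM2l (mulr_ge0 d0 (ltW id0)) hwz.
    by rewrite mulrA divfK // gt_eqF.
  have := ler_wpM2l (ltW g0) (le_trans hw h1).
  move=> h; clear -h; lra.
apply/ler_addgt0Pr => e e0.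
have dl : 0 < 1 - delta by clear -D1; lra.
have c0 : 0 <= CC by rewrite /CC /cc; apply: divr_ge0; [apply: mulr_ge0 | ]; clear -G0 D0' D1; lra.
set K := 2 * (D + 1) / alpha + 1.
have hK : alpha * K = 2 * (D + 1) + alpha.
  by rewrite /K mulrDr mulr1 mulrCA mulfV ?gt_eqF // mulr1.
have Kp : 0 < K.
  have : 0 <= 2 * (D + 1) / alpha by apply: divr_ge0; clear -D0 A0; lra.
  rewrite /K => h; clear -h; lra.
set sv := Num.min 1 (e / (2 + CC)).
have ec : 0 < e / (2 + CC) by apply: divr_gt0; clear -e0 c0; lra.
have sv0 : 0 < sv by rewrite lt_min ltr01 ec.
have sv1 : sv <= 1 by rewrite ge_min lexx.
have sve : sv * (2 + CC) <= e.
  have : sv <= e / (2 + CC) by rewrite ge_min lexx orbT.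
  by rewrite ler_pdivlMr //; clear -c0; lra.
set tau := sv ^+ 2 / (K + 1).
have tau0 : 0 < tau by rewrite divr_gt0 // ?exprn_gt0 //; clear -Kp; lra.
have e1 : (K + 1) * tau = sv ^+ 2 by rewrite /tau mulrC divfK // gt_eqF //; clear -Kp; lra.
have tauK : K * tau <= sv ^+ 2 by clear -e1 tau0; lra.
have taus : tau <= sv.
  have : tau <= sv ^+ 2 by have := mulr_ge0 (ltW Kp) (ltW tau0); clear -e1; lra.
  have : sv ^+ 2 <= sv by rewrite expr2; have := ltW sv0; clear -sv1; nra.
  move=> h1 h2; clear -h1 h2; lra.
have tau1 : tau <= 1 by clear -taus sv1; lra.
have [zb Ozb hzb] := inf_img_adh (f := fun d => normM M (d - z)) (fun d => normM_ge0 M (d - z)) Om0 tau0.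
have hzb' : normM M (zb - z) < D + tau := hzb.
have [dd Od1 hd1] := inf_img_adh (f := fun d => enorm (d - p)) (fun d => enorm_ge0 (d - p)) Om0 tau0.
have hd1' : enorm (dd - p) < dist p (zeros T) + tau := hd1.
set zs := if normM M (dd - p) <= normM M (zb - p) then dd else zb.
have Ozs : (zeros T) zs by rewrite /zs; case: ifP.
have nd1 : normM M (dd - p) <= na / alpha + tau.
  apply: le_trans (normM_le_enorm Msym Hmax _) _; clear -hd1' hdist; lra.
have nb1 : normM M (p - zs) <= normM M (p - zb).
  rewrite /zs; case: ifP => h; last by rewrite lexx.
  by rewrite (normMB Msym p dd) (normMB Msym p zb).
have nb2 : normM M (p - zs) <= na / alpha + tau.
  rewrite /zs; case: ifP => h; rewrite (normMB Msym p) //.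
  move/negbT: h; rewrite -ltNge => h; clear -h nd1; lra.
set nb := normM M (p - zs).
have nb0 : 0 <= nb by apply: normM_ge0.
have c1 := mono_res mm Msym Mpd s0 Tpu zE Ozb.
have c2 := mono_res mm Msym Mpd s0 Tpu zE Ozs.
set E := ip M (z - zb) (z - zb).
have Eid : E = ip M a a + 2 * ip M a (p - zb) + ip M (p - zb) (p - zb).
  by rewrite /E -(ip_split Msym); congr (ip M _ _); rewrite /a addrA subrK.
have hE2 : E <= (D + tau) ^+ 2.
  apply: (normM_sq_le Mpd); rewrite (normMB Msym); exact: ltW.
have hQ : nb ^+ 2 <= ip M (p - zb) (p - zb).
  by rewrite /nb normM_sq //; have := normM_sq_le Mpd nb1; rewrite normM_sq.
have hA : na ^+ 2 = ip M a a by rewrite /na normM_sq.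
have hAB : na ^+ 2 + nb ^+ 2 <= E by clear -hA Eid c1 hQ; lra.
have naD : na <= D + tau.
  apply: normM_le => //; first by clear -D0 tau0; lra.
  have := sqr_ge0 nb; clear -hAB hE2 hA; lra.
have hnb : alpha * nb <= na + alpha * tau.
  by have := ler_wpM2l (ltW a0) nb2; rewrite mulrDr mulrCA mulfV ?gt_eqF // mulr1.
set C := Num.min gamma (2 * gamma - gamma ^+ 2).
set t := alpha ^+ 2 / (alpha ^+ 2 + 1).
have ap : 0 < alpha ^+ 2 + 1 by move: (sqr_ge0 alpha) => h; clear -h; lra.
have ht : t * (alpha ^+ 2 + 1) = alpha ^+ 2 by rewrite /t divfK // gt_eqF.
have t0 : 0 <= t by rewrite /t divr_ge0 // ?sqr_ge0 // ltW.
have t1 : t <= 1 by rewrite /t ler_pdivrMr // mul1r lerDl ler01.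
have Cl : gamma <= 1 -> C = gamma by move=> gl; rewrite /C min_l //; clear -gl G0; nra.
have Cg : 1 < gamma -> C = 2 * gamma - gamma ^+ 2 by move=> gg; rewrite /C min_r //; clear -gg; nra.
have CCase : C = gamma \/ C = 2 * gamma - gamma ^+ 2.
  by case: (lerP gamma 1) => h; [left; apply: Cl | right; apply: Cg].
have C0 : 0 <= C by case: CCase => ->; clear -G0 G2; nra.
have C1 : C <= 1 by case: (lerP gamma 1) => h; [by rewrite Cl | rewrite Cg //; move: (sqr_ge0 (gamma - 1)) => hh; clear -hh; nra].
set y := if gamma <= 1 then (1 - gamma) *: zb + gamma *: zs else zs.
have Oy : (zeros T) y.
  rewrite /y; case: ifP => h //; apply: zeros_convex => //; exact: ltW.
set X := ip M (ze - y) (ze - y).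
have X1 : 1 < gamma -> X <= (1 - gamma) ^+ 2 * na ^+ 2 + nb ^+ 2.
  move=> gg; rewrite /X /y ifN; last by rewrite -ltNge.
  have -> : ze - zs = (1 - gamma) *: a + (p - zs).
    by rewrite /ze /a; apply/matrixP => i j; rewrite !mxE; ring.
  rewrite (ip_split Msym) !(ipZl, ipZr) // hA /nb normM_sq //.
  have : 0 <= (gamma - 1) * ip M a (p - zs) by apply: mulr_ge0 => //; clear -gg; lra.
  move=> h; clear -h; nra.
have X2 : gamma <= 1 -> X <= (1 - gamma) * E + gamma * nb ^+ 2.
  move=> gl; rewrite /X /y ifT //.
  have -> : ze - ((1 - gamma) *: zb + gamma *: zs) = (1 - gamma) *: (z - zb) + gamma *: (p - zs).
    by rewrite /ze; apply/matrixP => i j; rewrite !mxE; ring.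
  rewrite (ip_split Msym) !(ipZl, ipZr) // /nb normM_sq // -/E.
  have hq := ip_ge0 Mpd ((z - zb) - (p - zs)).
  rewrite (ipBl Msym) !(ipBr M (z - zb) (p - zs)) (ipC Msym (p - zs) (z - zb)) -/E in hq.
  have : 0 <= (gamma * (1 - gamma)) * (E + ip M (p - zs) (p - zs) - 2 * ip M (z - zb) (p - zs)).
    by apply: mulr_ge0; [apply: mulr_ge0 | ]; clear -G0 gl hq; lra.
  move=> h; clear -h; nra.
have core := scalar_core G0 G2 A0 t0 t1 ht CCase C0 C1 Cl Cg D0 tau0 tau1 (ltW sv0) hK tauK
  na0 nb0 naD hnb hAB hE2 X1 X2.
have q2 : QQ ^+ 2 = 1 - C * t.
  rewrite /QQ /qq sqr_sqrtr; first by rewrite /C /t -mulrA.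
  rewrite subr_ge0 -mulrA -/t -/C; clear -C0 C1 t0 t1; nra.
have qq0 : 0 <= QQ by apply: sqrtr_ge0.
have qq1 : QQ <= 1 by move: (mulr_ge0 C0 t0) => h; clear -h q2 qq0; nra.
rewrite -q2 in core.
have hX : normM M (ze - y) <= QQ * (D + tau) + sv.
  apply: normM_le => //; first by move: (mulr_ge0 qq0 (addr_ge0 D0 (ltW tau0))) => h; clear -h sv0; lra.
  have := ler_wpM2l (sqr_ge0 QQ) hE2.
  have := mulr_ge0 (mulr_ge0 qq0 (addr_ge0 D0 (ltW tau0))) (ltW sv0).
  rewrite -/X => h1 h2; clear -core h1 h2 tauK; nra.
have hy : distM M zp (zeros T) <= normM M (y - zp).
  exact: (inf_img_le (f := fun d => normM M (d - zp)) (fun d => normM_ge0 M (d - zp)) Oy).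
have htri : normM M (y - zp) <= normM M (ze - y) + normM M (ze - zp).
  have -> : y - zp = (y - ze) + (ze - zp) by rewrite addrA subrK.
  by apply: le_trans (normM_triangle Msym Mpd _ _) _; rewrite (normMB Msym y ze).
have h1 := ler_wpM2l c0 naD.
have h2 := ler_wpM2l c0 taus.
have h3 : QQ * tau <= tau by clear -qq1 tau0; nra.
clear -hy htri hX hzp h1 h2 h3 taus sve; lra.
Qed.

Lemma rate_ge (R : realType) (gamma delta alpha : R) :
  0 < gamma -> gamma < 2 -> 0 <= delta -> delta < 1 / 2 -> 0 < alpha ->
  qq gamma alpha + cc gamma delta <= rate gamma delta alpha.
Proof.
move=> g0 g2 d0 d1 a0.
rewrite /rate /cc -/(qq gamma alpha).
set q := qq gamma alpha.
set C := Num.min gamma (2 * gamma - gamma ^+ 2).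
set t := alpha ^+ 2 / (alpha ^+ 2 + 1).
have ap : 0 < alpha ^+ 2 + 1 by move: (sqr_ge0 alpha) => h; clear -h; lra.
have t0 : 0 <= t by rewrite /t divr_ge0 // ?sqr_ge0 // ltW.
have t1 : t <= 1 by rewrite /t ler_pdivrMr // mul1r lerDl ler01.
have C0 : 0 <= C.
  by rewrite /C le_min; apply/andP; split; move: g0 g2 => h1 h2; clear -h1 h2; nra.
have Cg : 1 < gamma -> C = 2 * gamma - gamma ^+ 2.
  by move=> gg; rewrite /C min_r //; clear -gg; nra.
have q2 : q ^+ 2 = 1 - C * t.
  rewrite /q /qq sqr_sqrtr; first by rewrite -/C /t -mulrA.
  have C1 : C <= 1.
    rewrite /C ge_min; apply/orP; right; move: (sqr_ge0 (gamma - 1)) => h; clear -h; nra.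
  rewrite subr_ge0 -mulrA -/t -/C; clear -C0 C1 t0 t1; nra.
have q0 : 0 <= q by apply: sqrtr_ge0.
have qg : gamma <= q + 1.
  have [gl|gg] := lerP gamma 1; first by clear -gl q0; lra.
  have CE := Cg gg; rewrite CE in q2.
  have hC : 0 <= 2 * gamma - gamma ^+ 2 by rewrite -CE.
  have h : 0 <= (2 * gamma - gamma ^+ 2) * (1 - t) by apply: mulr_ge0 => //; rewrite subr_ge0.
  clear -q2 h q0 gg; nra.
set ms := Num.min gamma 1 / Num.sqrt (alpha ^+ 2 + 1).
have ms0 : 0 <= ms.
  rewrite /ms divr_ge0 ?sqrtr_ge0 //.
  by rewrite le_min; apply/andP; split; [exact: ltW | exact: ler01].
have dl : 0 < 1 - delta by clear -d1; lra.
set id := (1 - delta)^-1.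
have id0 : 0 < id by rewrite invr_gt0.
have hid : (1 - delta) * id = 1 by rewrite mulfV // gt_eqF.
have hq : q = (1 - delta) * id * q by rewrite hid mul1r.
have h : 0 <= id * delta * (q + ms + 1 - gamma).
  apply: mulr_ge0; [apply: mulr_ge0 => //; exact: ltW | clear -qg ms0; lra].
rewrite div1r -/id; clear -hq h; nra.
Qed.

Unset Implicit Arguments.

Theorem corollary1 (R : realType) (n : nat)
  (T : 'cV[R]_n -> 'cV[R]_n -> Prop) (M : 'M[R]_n)
  (z : nat -> 'cV[R]_n) (sigma eta : nat -> R)
  (gamma delta lmin r kappa alpha : R) (zbar0 : 'cV[R]_n) :
  maximal_monotone T ->
  zeros T !=set0 ->
  self_adjoint M -> pos_def M -> is_lambda_max M 1 ->
  is_lambda_min M lmin ->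
  0 < gamma < 2 ->
  0 <= delta < 1 / 2 ->
  (forall k, 0 <= sigma k) -> (forall k, 0 <= eta k) ->
  cvgn (series eta) ->
  (exists c, 0 < c /\ forall k, c <= sigma k) ->
  (forall k, IGPPAstep_out T (z k) (sigma k) (eta k) delta gamma M (z k.+1)) ->
  bounded_metric_subregular T ->
  zeros T zbar0 ->
  (forall d, zeros T d -> normM M (zbar0 - z 0%N) <= normM M (d - z 0%N)) ->
  enorm zbar0 + (1 / lmin) * (distM M (z 0%N) (zeros T) + gamma * limn (series eta)) <= r ->
  0 < kappa -> subregular_on T r kappa ->
  0 < alpha -> rate gamma delta alpha < 1 ->
  (forall k, kappa * alpha <= sigma k) ->
  forall k, distM M (z k) (zeros T) <= rate gamma delta alpha ^+ k * distM M (z 0%N) (zeros T).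
Proof.
move=> mm Om0 Msym Mpd Hmax Hmin /andP[g0 g2] /andP[d0 d1] sig0 eta0 cvg _ step _ Ozb0
  zbmin hr k0 sr a0 _ ks.
set D0 := distM M (z 0%N) (zeros T).
set S := limn (series eta).
have ka0 : 0 < kappa * alpha by rewrite mulr_gt0.
have spos : forall k, 0 < sigma k by move=> k; exact: lt_le_trans ka0 (ks k).
have hS : forall k, series eta k <= S.
  apply: nondecreasing_cvgn_le => //; apply/nondecreasing_seqP => m.
  by rewrite seriesSr lerDl.
have hzb0 : normM M (z 0%N - zbar0) <= D0.
  rewrite (normMB Msym); apply: lb_le_inf.
    by case: Om0 => d Od; exists (normM M (d - z 0%N)), d.
  by move=> _ [d Od <-]; apply: zbmin.
have hA : forall k, normM M (z k - zbar0) <= normM M (z 0%N - zbar0) + gamma * series eta k.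
  elim=> [|k IH].
    by rewrite /series /= big_geq // mulr0 addr0.
  have [w [p [[u [Tpu zE]] [hw zpE]]]] := step k.
  set ze := gamma *: p + (1 - gamma) *: z k.
  have h1 : normM M (ze - zbar0) <= normM M (z k - zbar0).
    exact: (fejer_e mm Msym Mpd g0 g2 (spos k) Tpu zE Ozb0).
  have h2 : normM M (z k.+1 - ze) <= gamma * eta k.
    have -> : z k.+1 - ze = gamma *: (w - p).
      by rewrite zpE /ze; apply/matrixP => i j; rewrite !mxE; ring.
    rewrite normMZ // gtr0_norm // ler_pM2l //.
    by move: hw; rewrite le_min => /andP[].
  have -> : z k.+1 - zbar0 = (ze - zbar0) + (z k.+1 - ze) by rewrite [RHS]addrC addrA subrK.
  apply: le_trans (normM_triangle Msym Mpd _ _) _.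
  rewrite seriesSr mulrDr; move: h1 h2 IH => h1 h2 IH; clear -h1 h2 IH; lra.
have hstep : forall k, distM M (z k.+1) (zeros T) <= rate gamma delta alpha * distM M (z k) (zeros T).
  move=> k.
  have [w [p [[u [Tpu zE]] [hw zpE]]]] := step k.
  have pr : enorm p <= r.
    have lm0 := lmin_gt0 Msym Mpd Hmin.
    have e1 : enorm p <= enorm zbar0 + enorm (p - zbar0).
      by have := enorm_triangle zbar0 (p - zbar0); rewrite addrC subrK.
    have e2 := enorm_le_normM Msym Mpd Hmax Hmin (p - zbar0).
    have e3 : normM M (p - zbar0) <= normM M (z k - zbar0).
      exact: (fejer_p mm Msym Mpd (spos k) Tpu zE Ozb0).
    have e4 : normM M (z k - zbar0) <= D0 + gamma * S.
      apply: le_trans (hA k) _; apply: lerD => //; rewrite ler_pM2l //.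
    have e5 : normM M (p - zbar0) / lmin <= (D0 + gamma * S) / lmin.
      by rewrite ler_pM2r ?invr_gt0 //; apply: le_trans e3 e4.
    apply: le_trans hr; rewrite -/D0 -/S div1r mulrC.
    move: e1 e2 e5 => e1 e2 e5; clear -e1 e2 e5; lra.
  have := one_step mm Om0 Msym Mpd Hmax g0 g2 d0 d1 k0 sr a0 Tpu zE hw zpE (ks k) pr.
  move=> h; apply: le_trans h _; apply: ler_wpM2r.
    by apply: inf_img_ge0 => // x; exact: normM_ge0.
  exact: rate_ge.
have rate0 : 0 <= rate gamma delta alpha.
  apply: le_trans (rate_ge g0 g2 d0 d1 a0); apply: addr_ge0; first exact: sqrtr_ge0.
  rewrite /cc; apply: divr_ge0; first by apply: mulr_ge0 => //; exact: ltW.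
  by move: d1 => h; clear -h; lra.
elim=> [|k IH]; first by rewrite expr0 mul1r.
apply: le_trans (hstep k) _.
by rewrite exprS -mulrA ler_wpM2l.
Qed.
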